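(* Let $\mathcal K=\{\mathbf x\in\mathbb R^n : \mathbf k_i^T\mathbf x\ge 0,\ i=1,\dots,p\}$ be a polyhedral cone with non-empty topological interior, where each $\mathbf k_i$ has unit Euclidean length, and let $z_\infty$ be the inradius of $\mathcal K$. Define linear programs as follows. Problem $P_0$: maximize $z$ over $(\mathbf x,z)\in\mathbb R^n\times\mathbb R$ subject to $\mathbf k_i^T\mathbf x\ge z$ for all $i$ and $-1\le x_i\le 1$ for all $i=1,\dots,n$. Given Problem $P_\ell$, let $(\mathbf x_\ell,z_\ell)$ be an (arbitrarily chosen) optimal solution of $P_\ell$, let $\mathbf u_\ell=\mathbf x_\ell/\|\mathbf x_\ell\|$, and let Problem $P_{\ell+1}$ be Problem $P_\ell$ with the additional constraint $\mathbf u_\ell^T\mathbf x\le 1$. Let $w_\ell=z_\ell/\|\mathbf x_\ell\|$. Then \[ z_0\ge z_1\ge\cdots\ge z_\ell\ge\cdots\ge z_\infty, \] and for any nonnegative integers $m$ and $n'$ we have $z_m\ge z_\infty\ge w_{n'}$.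
   Context: $B_r(\mathbf x)=\{\mathbf y\in\mathbb R^n:\|\mathbf x-\mathbf y\|\le r\}$ denotes the closed ball, with $\|\cdot\|$ the Euclidean norm. The insphere of a polyhedral cone $\mathcal K$ is the largest ball contained in $\mathcal K$ whose center lies in $B_1(\mathbf 0)$, and the inradius is its radius. (For each $\ell$, problem $P_\ell$ has an optimal solution and $\|\mathbf x_\ell\|\ge 1$, so $\mathbf u_\ell$ is well defined.) *)

(* Defs.v *)
From HB Require Import structures.
From mathcomp Require Import all_boot all_order all_algebra.
From mathcomp Require Import reals.
Set Implicit Arguments. Unset Strict Implicit. Unset Printing Implicit Defensive.
Import Order.TTheory GRing.Theory Num.Theory.
Local Open Scope ring_scope.

Section Defs.
Variables (R : realType) (n p : nat).

Definition dot (u v : 'rV[R]_n) : R := \sum_(i < n) u 0 i * v 0 i.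
Definition enorm (v : 'rV[R]_n) : R := Num.sqrt (dot v v).

Definition in_cone (k : 'I_p -> 'rV[R]_n) (x : 'rV[R]_n) : Prop :=
  forall i, 0 <= dot (k i) x.

Definition ball_in_cone (k : 'I_p -> 'rV[R]_n) (c : 'rV[R]_n) (r : R) : Prop :=
  forall y, enorm (c - y) <= r -> in_cone k y.

Definition cone_has_interior (k : 'I_p -> 'rV[R]_n) : Prop :=
  exists c r, 0 < r /\ ball_in_cone k c r.

(* r is the inradius: the radius of the largest ball contained in K
   whose center lies in B_1(0). *)
Definition is_inradius (k : 'I_p -> 'rV[R]_n) (r : R) : Prop :=
  (exists c, enorm c <= 1 /\ ball_in_cone k c r) /\
  (forall c r', enorm c <= 1 -> ball_in_cone k c r' -> r' <= r).

Definition unitv (v : 'rV[R]_n) : 'rV[R]_n := (enorm v)^-1 *: v.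

(* Feasible set of problem P_l, where xs m is the chosen optimal x_m of P_m. *)
Definition lp_feasible (k : 'I_p -> 'rV[R]_n) (xs : nat -> 'rV[R]_n) (l : nat)
    (x : 'rV[R]_n) (z : R) : Prop :=
  (forall i, z <= dot (k i) x) /\
  (forall j, -1 <= x 0 j <= 1) /\
  (forall m, (m < l)%N -> dot (unitv (xs m)) x <= 1).

Definition lp_optimal (k : 'I_p -> 'rV[R]_n) (xs : nat -> 'rV[R]_n) (l : nat)
    (x : 'rV[R]_n) (z : R) : Prop :=
  lp_feasible k xs l x z /\
  (forall x' z', lp_feasible k xs l x' z' -> z' <= z).

End Defs.

(* Main.v *)
Require Import Defs.
From HB Require Import structures.
From mathcomp Require Import all_boot all_order all_algebra.
From mathcomp Require Import reals.
From mathcomp Require Import lra.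
Import Order.TTheory GRing.Theory Num.Theory.
Local Open Scope ring_scope.

Set Implicit Arguments.
Section H.
Variables (R : realType) (n : nat).
Implicit Types (u v w : 'rV[R]_n).

Lemma dotC u v : dot u v = dot v u.
Proof. by apply: eq_bigr => i _; rewrite mulrC. Qed.

Lemma dotDr u v w : dot u (v + w) = dot u v + dot u w.
Proof. by rewrite /dot -big_split; apply: eq_bigr => i _; rewrite !mxE mulrDr. Qed.

Lemma dotZr u v (a : R) : dot u (a *: v) = a * dot u v.
Proof. by rewrite /dot mulr_sumr; apply: eq_bigr => i _; rewrite !mxE mulrCA. Qed.

Lemma dotNr u v : dot u (- v) = - dot u v.
Proof. by rewrite -scaleN1r dotZr mulN1r. Qed.

Lemma dotBr u v w : dot u (v - w) = dot u v - dot u w.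
Proof. by rewrite dotDr dotNr. Qed.

Lemma dotBl u v w : dot (v - w) u = dot v u - dot w u.
Proof. by rewrite dotC dotBr !(dotC u). Qed.

Lemma dotZl u v (a : R) : dot (a *: v) u = a * dot v u.
Proof. by rewrite dotC dotZr dotC. Qed.

Lemma dot0r u : dot u 0 = 0.
Proof. by rewrite /dot big1 // => i _; rewrite mxE mulr0. Qed.

Lemma dot_ge0 u : 0 <= dot u u.
Proof. by apply: sumr_ge0 => i _; rewrite -expr2 sqr_ge0. Qed.

Lemma dot_eq0 u : dot u u = 0 -> u = 0.
Proof.
move=> /eqP; rewrite psumr_eq0 => [/allP H|i _]; last by rewrite -expr2 sqr_ge0.
apply/rowP => j; rewrite mxE.
have := H j (mem_index_enum j); rewrite mulf_eq0 orbb => /eqP ->.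
by [].
Qed.

Lemma enorm_sq u : enorm u ^+ 2 = dot u u.
Proof. by rewrite /enorm sqr_sqrtr // dot_ge0. Qed.

Lemma enorm_ge0 u : 0 <= enorm u.
Proof. by rewrite /enorm sqrtr_ge0. Qed.

Lemma coord_sq u j : u 0 j * u 0 j <= dot u u.
Proof.
rewrite /dot (bigD1 j) //= lerDl; apply: sumr_ge0 => i _.
by rewrite -expr2 sqr_ge0.
Qed.

Lemma key1 u c : dot u u <= 1 -> dot c c <= 1 -> dot u c <= 1.
Proof.
move=> hu hc; have := dot_ge0 (u - c).
rewrite dotBl !dotBr (dotC c u) => h; lra.
Qed.

Lemma unit_dot v : dot (unitv v) (unitv v) <= 1.
Proof.
rewrite /unitv dotZl dotZr -enorm_sq.
have [->|nz] := eqVneq (enorm v) 0; first by rewrite invr0 !mul0r.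
by rewrite mulrA -expr2 exprVn mulVf ?expf_neq0.
Qed.

Lemma cs (k d : 'rV[R]_n) : dot k k = 1 -> dot k d <= enorm d.
Proof.
move=> hk; have [e0|nz] := eqVneq (enorm d) 0.
  have : dot d d = 0 by rewrite -enorm_sq e0 expr0n.
  by move/dot_eq0 => ->; rewrite dot0r enorm_ge0.
have sp : 0 < enorm d by rewrite lt0r nz enorm_ge0.
have := dot_ge0 (enorm d *: k - d).
rewrite dotBl !dotBr !dotZl !dotZr hk (dotC d k) -enorm_sq => h.
have : enorm d * (2 * dot k d) <= enorm d * (2 * enorm d) by nra.
rewrite ler_pM2l // => h2; lra.
Qed.

End H.
Unset Implicit Arguments.

Theorem proposition3 (R : realType) (n p : nat) (k : 'I_p -> 'rV[R]_n)
  (hk : forall i, enorm (k i) = 1)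
  (hint : cone_has_interior k)
  (zinf : R) (hzinf : is_inradius k zinf)
  (xs : nat -> 'rV[R]_n) (zs : nat -> R)
  (hopt : forall l, lp_optimal k xs l (xs l) (zs l)) :
  (forall l, zs l.+1 <= zs l) /\
  (forall l, zinf <= zs l) /\
  (forall m n' : nat, zinf <= zs m /\ zs n' / enorm (xs n') <= zinf).
Proof.
have hkk : forall i, dot (k i) (k i) = 1.
  by move=> i; rewrite -enorm_sq hk expr1n.
have en0 : enorm (0 : 'rV[R]_n) = 0 by rewrite /enorm dot0r sqrtr0.
have zinf0 : 0 <= zinf.
  apply: (hzinf.2 0 0); first by rewrite en0.
  move=> y; rewrite sub0r => hy.
  have e0 : enorm (- y) = 0 by apply/eqP; rewrite eq_le hy enorm_ge0.
  have : dot (- y) (- y) = 0 by rewrite -enorm_sq e0 expr0n.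
  move/dot_eq0/eqP; rewrite oppr_eq0 => /eqP -> i; by rewrite dot0r.
have part2 : forall l, zinf <= zs l.
  move=> l; case: hzinf => [[c [hc hball]] _].
  case: (hopt l) => _ hmax; apply: (hmax c zinf); split; [|split].
  - move=> i; have := hball (c - zinf *: k i).
    rewrite opprB addrC subrK /enorm dotZl dotZr hkk mulr1 -expr2 sqrtr_sqr.
    rewrite ger0_norm // => /(_ (lexx _)) /(_ i).
    by rewrite dotBr dotZr hkk mulr1 subr_ge0.
  - have hcc : dot c c <= 1.
      by rewrite -enorm_sq; have := @enorm_ge0 _ _ c; nra.
    move=> j; have := @coord_sq _ _ c j => h.
    apply/andP; split; nra.
  - move=> m _; apply: key1; first exact: unit_dot.
    by rewrite -enorm_sq; have := @enorm_ge0 _ _ c; nra.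
have part3 : forall n', zs n' / enorm (xs n') <= zinf.
  move=> n'; set x := xs n'; set N := enorm x.
  have [->|nz] := eqVneq N 0; first by rewrite invr0 mulr0.
  have sp : 0 < N by rewrite lt0r nz enorm_ge0.
  apply: (hzinf.2 (unitv x)).
    rewrite /enorm /unitv dotZl dotZr -enorm_sq -/N mulrA -expr2 exprVn.
    by rewrite mulVf ?expf_neq0 // sqrtr1.
  move=> y hy i.
  have h1 := @cs _ _ _ (unitv x - y) (hkk i).
  rewrite dotBr in h1.
  have h2 : zs n' <= dot (k i) x := (hopt n').1.1 i.
  have h3 : dot (k i) (unitv x) = N^-1 * dot (k i) x by rewrite /unitv dotZr.
  have h4 : N^-1 * zs n' <= N^-1 * dot (k i) x.
    by rewrite ler_wpM2l // invr_ge0 ltW.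
  rewrite mulrC in hy; lra.
split; last split => //.
  move=> l; case: (hopt l) => _ hmax; apply: (hmax (xs l.+1)).
  case: (hopt l.+1) => [[a [b c]] _]; split; [|split] => //.
  by move=> m hm; apply: c; apply: ltn_trans hm _.
Qed.
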